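(* Let $\nu,m_1,m_2,t$ be positive integers with $\nu>m_i\ge t$ for $i\in\{1,2\}$ and $2\nu\ge 2m_1+m_2-t$. Suppose $\mathcal F\subseteq\mathcal P_{m_1}$ and $\mathcal G\subseteq\mathcal P_{m_2}$ are nonempty cross $t$-intersecting families. Then $$|\mathcal F|\le {\tau_t(\mathcal F)\brack t}{m_2-t+1\brack 1}^{\tau_t(\mathcal G)-t}N'(\tau_t(\mathcal G);m_1;2\nu).$$
   Context: Let $q$ be a prime power, $\nu\ge 1$ an integer, and $f$ a non-degenerate alternating bilinear form on $V=\mathbb F_q^{2\nu}$. A subspace $W\le V$ is totally isotropic if $f(x,y)=0$ for all $x,y\in W$. For $0\le m\le \nu$, $\mathcal P_m$ denotes the set of all $m$-dimensional totally isotropic subspaces of $V$. Gaussian binomial coefficient: ${n\brack k}=\prod_{i=0}^{k-1}\frac{q^{n-i}-1}{q^{k-i}-1}$, ${n\brack 0}=1$. For integers $0\le a\le m\le\nu$, $N'(a;m;2\nu)=\prod_{i=1}^{m-a}\frac{q^{2(\nu-m+i)}-1}{q^{i}-1}$; this equals the number of members of $\mathcal P_m$ containing a fixed member of $\mathcal P_a$. Families $\mathcal F\subseteq\mathcal P_{m_1}$, $\mathcal G\subseteq\mathcal P_{m_2}$ are cross $t$-intersecting if $\dim(F\cap G)\ge t$ for all $F\in\mathcal F$, $G\in\mathcal G$. For a family $\mathcal H$ of totally isotropic subspaces, a $t$-cover of $\mathcal H$ is a totally isotropic subspace $X$ with $\dim(X\cap H)\ge t$ for all $H\in\mathcal H$,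 and $\tau_t(\mathcal H)$ is the minimum dimension of a $t$-cover of $\mathcal H$. *)

(* Defs.v *)
From HB Require Import structures.
From mathcomp Require Import all_boot all_order all_algebra all_field.
Set Implicit Arguments. Unset Strict Implicit. Unset Printing Implicit Defensive.
Import Order.TTheory GRing.Theory Num.Theory.
Local Open Scope ring_scope.

(* Over a
   finite field we equip the type of subspaces with a finType structure
   (via the injection into matrices), so families of subspaces are
   finite sets {set VS F n}. *)
Definition VS (F : finFieldType) (n : nat) := {vspace 'rV[F]_n}.
HB.instance Definition _ (F : finFieldType) (n : nat) :=
  Countable.copy (VS F n) (can_type (@VectorInternalTheory.vs2mxK F 'rV[F]_n)).
HB.instance Definition _ (F : finFieldType) (n : nat) :=
  Finite.copy (VS F n) (can_type (@VectorInternalTheory.vs2mxK F 'rV[F]_n)).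

Section Symplectic.
Variables (F : finFieldType) (n : nat).
Variable f : 'rV[F]_n -> 'rV[F]_n -> F.

Definition bilinear_form : Prop :=
  (forall (a : F) x x' y, f (a *: x + x') y = a * f x y + f x' y) /\
  (forall (a : F) x y y', f x (a *: y + y') = a * f x y + f x y').

Definition alternating_form : Prop := forall x, f x x = 0.

Definition nondegenerate_form : Prop :=
  forall x, (forall y, f x y = 0) -> x = 0.

Definition nondeg_alternating_bilinear_form : Prop :=
  [/\ bilinear_form, alternating_form & nondegenerate_form].

Definition totally_isotropic (W : VS F n) : bool :=
  [forall x : 'rV[F]_n, forall y : 'rV[F]_n,
     (x \in W) ==> (y \in W) ==> (f x y == 0)].

Definition Pm (m : nat) : {set VS F n} :=
  [set W : VS F n | (\dim W == m)%N && totally_isotropic W].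

Definition cross_t_intersecting (t : nat) (FF GG : {set VS F n}) : Prop :=
  forall A B, A \in FF -> B \in GG -> (t <= \dim (A :&: B))%N.

Definition t_cover (t : nat) (H : {set VS F n}) (X : VS F n) : bool :=
  totally_isotropic X && [forall A in H, (t <= \dim (X :&: A))%N].

(* tau_t(H): minimum dimension of a t-cover of H.  (If H has no t-cover the
   value is the junk default n.+1; this never happens in the theorem below.) *)
Definition tau (t : nat) (H : {set VS F n}) : nat :=
  \big[minn/n.+1]_(X : VS F n | t_cover t H X) \dim X.

End Symplectic.

Definition gauss (q n k : nat) : rat :=
  \prod_(i < k) (((q%:R : rat) ^+ (n - i) - 1) / ((q%:R : rat) ^+ (k - i) - 1)).

Definition Nprime (q a m nu : nat) : rat :=
  \prod_(1 <= i < (m - a).+1)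
     (((q%:R : rat) ^+ (2 * (nu - m + i)) - 1) / ((q%:R : rat) ^+ i - 1)).

(* Main.v *)
Require Import Defs.
From HB Require Import structures.
From mathcomp Require Import all_boot all_order all_algebra all_field.
From mathcomp Require Import zify ring.
Set Implicit Arguments. Unset Strict Implicit. Unset Printing Implicit Defensive.
Import Order.TTheory GRing.Theory Num.Theory.
Local Open Scope ring_scope.

Section Basics.
Variables (F : finFieldType) (n : nat).
Local Notation V := 'rV[F]_n.
Local Notation q := #|F|.

Lemma dim_add_line (S : {vspace V}) v : v \notin S -> \dim (S + <[v]>%VS) = (\dim S).+1.
Proof.
move=> vS.
have v0 : v != 0 by apply: contraNneq vS => ->; rewrite mem0v.
have := dimv_sum_cap S <[v]>%VS; rewrite dim_vline v0.
suff -> : \dim (S :&: <[v]>%VS) = 0%N by rewrite addn0 addn1.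
apply/eqP; rewrite dimv_eq0; apply/eqP.
have := dimvS (capvSr S <[v]>%VS); rewrite dim_vline v0.
case: (leqP (\dim (S :&: <[v]>%VS)) 0) => [|h1] h2.
  by move=> _; apply/eqP; rewrite -dimv_eq0; rewrite -leqn0.
exfalso; have e : (S :&: <[v]>%VS)%VS = <[v]>%VS.
  apply/eqP; rewrite eqEdim capvSr dim_vline v0 /=; by [].
have : v \in (S :&: <[v]>)%VS by rewrite e memv_line.
by rewrite memv_cap (negbTE vS).
Qed.

Lemma exists_subdim (Y : {vspace V}) d : (d <= \dim Y)%N ->
  exists2 S : {vspace V}, (S <= Y)%VS & \dim S = d.
Proof.
elim: d => [|d IH] hd; first by exists 0%VS; rewrite ?sub0v ?dimv0.
have [S SY dS] := IH (ltnW hd).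
have : ~~ (Y <= S)%VS.
  apply: contraTN hd => YS; rewrite -ltnNge ltnS -dS; exact: dimvS.
case/subvPn => v vY vS.
exists (S + <[v]>%VS)%VS; last by rewrite dim_add_line // dS.
by rewrite subv_add SY -memvE.
Qed.

Lemma card_diff (U W : {vspace V}) : (W <= U)%VS ->
  #|[pred v | (v \in U) && (v \notin W)]| = (q ^ \dim U - q ^ \dim W)%N.
Proof.
move=> WU; rewrite -!card_vspace -(cardID W U).
have -> : #|[predI U & W]| = #|W|.
  apply: eq_card => v; rewrite !inE; case vW: (v \in W); rewrite ?andbT ?andbF //.
  exact: (subvP WU).
by rewrite addKn; apply: eq_card => v; rewrite !inE andbC.
Qed.

End Basics.
Local Close Scope ring_scope.

Section Count.
Variables (F : finFieldType) (n : nat).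
Local Notation V := 'rV[F]_n.
Local Notation q := #|F|.
Variable Q : VS F n -> bool.
Hypothesis Qh : forall U U' : VS F n, (U' <= U)%VS -> Q U -> Q U'.
Variable g : nat -> nat.
Hypothesis Hg : forall U : VS F n, Q U ->
  #|[set v : V | (v \notin U) && Q (U + <[v]>)%VS]| <= g (\dim U).

Definition SS (W : VS F n) k :=
  [set U : VS F n | [&& (W <= U)%VS, \dim U == \dim W + k & Q U]].

Lemma count_core k : forall W : VS F n,
  #|SS W k| * \prod_(j < k) (q ^ (\dim W + k) - q ^ (\dim W + j)) <=
  \prod_(j < k) g (\dim W + j).
Proof.
elim: k => [|k IH] W.
  rewrite !big_ord0 muln1 -(cards1 W); apply: subset_leq_card.
  apply/subsetP => U; rewrite !inE addn0 => /and3P[WU dU _].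
  have h : (U == W :> {vspace V}) by rewrite eq_sym eqEdim WU (eqP dU) leqnn.
  by apply/eqP; apply/eqP: h.
set a := \dim W.
case QW: (Q W); last first.
  suff -> : SS W k.+1 = set0 by rewrite cards0.
  apply/setP => U; rewrite !inE; apply/negP => /and3P[WU _ QU].
  by move: QW; rewrite (Qh WU QU).
rewrite big_ord_recl big_ord_recl /= addn0 mulnA.
set c1 := \prod_(i < k) _.
set G1 := \prod_(i < k) _.
have e1 : c1 = \prod_(j < k) (q ^ ((a + 1) + k) - q ^ ((a+1) + j)).
  by apply: eq_bigr => j _; rewrite /bump leq0n add1n; congr (_ ^ _ - _ ^ _); lia.
have e2 : G1 = \prod_(j < k) g ((a + 1) + j).
  by apply: eq_bigr => j _; rewrite /bump leq0n add1n; congr (g _); lia.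
have step : #|SS W k.+1| * (q ^ (a + k.+1) - q ^ a) <=
    \sum_(v : V) ((v \notin W) && Q (W + <[v]>)%VS) * #|SS (W + <[v]>)%VS k|.
  rewrite -sum_nat_const.
  have -> : \sum_(U in SS W k.+1) (q ^ (a + k.+1) - q ^ a) =
      \sum_(U in SS W k.+1) \sum_(v : V) ((v \in U) && (v \notin W) : nat).
    apply: eq_bigr => U; rewrite inE => /and3P[WU dU _].
    rewrite -(eqP dU) /a -card_diff // -sum1_card big_mkcond /=.
    by apply: eq_bigr => v _; rewrite !inE; case: (_ && _).
  rewrite exchange_big /=.
  apply: leq_sum => v _.
  have key : forall U, U \in SS W k.+1 -> v \in U -> v \notin W ->
      Q (W + <[v]>)%VS && (U \in SS (W + <[v]>)%VS k).
    move=> U; rewrite !inE => /and3P[WU dU QU] vU vW.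
    have sub : (W + <[v]> <= U)%VS by rewrite subv_add WU -memvE.
    rewrite (Qh sub QU) sub QU (eqP dU) dim_add_line //= andbT.
    by rewrite -/a addSnnS.
  case: (boolP (v \notin W)) => vW /=; last first.
    by rewrite big1 // => U _; rewrite andbF.
  case: (boolP (Q _)) => QWv /=.
    rewrite mul1n -sum1_card (big_mkcond (fun U => U \in SS W _)).
    rewrite (big_mkcond (fun U => U \in SS (W + _)%VS _)) /=.
    apply: leq_sum => U _; case: ifP => US; case: (boolP (v \in U)) => vU //=.
    by have/andP[_ ->] := key U US vU vW.
  rewrite mul0n big1 // => U US; case: (boolP (v \in U)) => vU //=.
  by have/andP[] := key U US vU vW; rewrite (negbTE QWv).
apply: (leq_trans (leq_mul step (leqnn c1))).
rewrite big_distrl /=.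
apply: (@leq_trans (\sum_v ((v \notin W) && Q (W + <[v]>)%VS) * G1)).
  apply: leq_sum => v _; rewrite -mulnA; case: (boolP (_ && _)) => //= /andP[vW _].
  rewrite !mul1n; have := IH (W + <[v]>)%VS; rewrite dim_add_line // -/a e1 e2 addn1.
  by [].
rewrite -big_distrl /= leq_mul2r; apply/orP; right.
have <- : #|[set v : V | (v \notin W) && Q (W + <[v]>)%VS]| =
    \sum_v ((v \notin W) && Q (W + <[v]>)%VS : nat).
  rewrite -sum1_card big_mkcond /=; apply: eq_bigr => v _; rewrite inE.
  by case: (_ && _).
exact: Hg.
Qed.
End Count.
Local Open Scope ring_scope.

Lemma ratio_term (q a b c : nat) : (1 < q)%N -> (c <= a)%N -> (c < b)%N ->
  (((q ^ a - q ^ c)%N%:R / (q ^ b - q ^ c)%N%:R) : rat) =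
  (q%:R ^+ (a - c) - 1) / (q%:R ^+ (b - c) - 1).
Proof.
move=> q1 ca cb.
have q0 : (0 < q)%N by apply: ltnW.
rewrite !natrB ?leq_pexp2l // ?(ltnW cb) // !natrX.
rewrite -[in LHS](subnKC ca) -[in LHS](subnKC (ltnW cb)) !exprD.
have hq : (q%:R : rat) ^+ c != 0 by rewrite expf_neq0 // pnatr_eq0 -lt0n.
have hb : (q%:R : rat) ^+ (b - c) - 1 != 0.
  rewrite subr_eq0 -natrX pnatr_eq1 -(expn0 q) (inj_eq (expnI q1)).
  by rewrite subn_eq0 -ltnNge.
field.
rewrite hb -{2}(mulr1 (_ ^+ c)) -mulrBr mulf_neq0 //.
Qed.

Lemma gauss_ge0 q x t : (0 < q)%N -> 0 <= gauss q x t.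
Proof.
move=> q0; rewrite /gauss; apply: prodr_ge0 => i _.
have h : forall k, 0 <= (q%:R : rat) ^+ k - 1.
  by move=> k; rewrite subr_ge0 exprn_ege1 // ler1n.
by apply: divr_ge0.
Qed.

Section Gauss.
Variables (F : finFieldType) (n : nat).
Local Notation V := 'rV[F]_n.
Local Notation q := #|F|.

Lemma q_gt1 : (1 < q)%N. Proof. exact: finNzRing_gt1. Qed.

Lemma prod_pos (a b : nat) : (a <= b)%N ->
  (0 < \prod_(j < a) (q ^ b - q ^ j))%N.
Proof.
move=> ab; rewrite prodn_gt0 // => j; rewrite subn_gt0 ltn_exp2l ?q_gt1 //.
exact: leq_trans (ltn_ord j) ab.
Qed.

Lemma card_subdim (X : VS F n) t :
  (#|[set S : VS F n | (S <= X)%VS && (\dim S == t)]|%:R : rat) <=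
  gauss q (\dim X) t.
Proof.
set x := \dim X.
have q1 := q_gt1.
case: (ltnP x t) => xt.
  rewrite (_ : [set _ | _] = set0) ?cards0 ?gauss_ge0 ?(ltnW q1) //.
  apply/setP => S; rewrite !inE; apply/negP => /andP[SX /eqP dS].
  by move: (dimvS SX); rewrite dS -/x leqNgt xt.
have Qh : forall U U' : VS F n, (U' <= U)%VS -> (U <= X)%VS -> (U' <= X)%VS.
  by move=> U U' h1 h2; apply: subv_trans h1 h2.
have Hg : forall U : VS F n, (U <= X)%VS ->
    (#|[set v : V | (v \notin U) && (U + <[v]> <= X)%VS]| <= q ^ x - q ^ \dim U)%N.
  move=> U UX; rewrite -card_diff //; apply: subset_leq_card; apply/subsetP => v.
  by rewrite !inE subv_add UX -memvE andbC.
have C := @count_core F n (fun U => (U <= X)%VS) Qh (fun d => q ^ x - q ^ d)%N Hg t 0%VS.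
rewrite dimv0 in C.
have -> : [set S : VS F n | (S <= X)%VS && (\dim S == t)] = SS (fun U => (U <= X)%VS) 0%VS t.
  by apply/setP => S; rewrite !inE sub0v dimv0 add0n andbC.
set D := \prod_(j < t) _ in C.
have D0 : (0 < D)%N by rewrite /D; under eq_bigr do rewrite add0n; exact: prod_pos.
have eG : gauss q x t = (\prod_(j < t) (q ^ x - q ^ (0 + j)))%:R / D%:R.
  rewrite /D !natr_prod -prodf_div /gauss; apply: eq_bigr => j _.
  rewrite !add0n ratio_term //; exact: ltnW (leq_trans (ltn_ord j) xt).
by rewrite eG ler_pdivlMr ?ltr0n // -natrM ler_nat.
Qed.
End Gauss.

Section Symp.
Variables (F : finFieldType) (n : nat).
Local Notation V := 'rV[F]_n.
Local Notation q := #|F|.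
Variable f : V -> V -> F.
Hypothesis Hf : nondeg_alternating_bilinear_form f.

Lemma f_lin1 a x x' y : f (a *: x + x') y = a * f x y + f x' y.
Proof. by move: Hf; rewrite /nondeg_alternating_bilinear_form /bilinear_form => -[[h _] _ _]. Qed.
Lemma f_lin2 a x y y' : f x (a *: y + y') = a * f x y + f x y'.
Proof. by move: Hf; rewrite /nondeg_alternating_bilinear_form /bilinear_form => -[[_ h] _ _]. Qed.
Lemma f_nd x : (forall y, f x y = 0) -> x = 0.
Proof. by move: Hf; rewrite /nondeg_alternating_bilinear_form => -[_ _ h]; apply: h. Qed.
Lemma f_x0 x : f x 0 = 0.
Proof.
have := f_lin2 1 x 0 0; rewrite addr0 scaler0 mul1r.
by move=> /(congr1 (fun z => z - f x 0)); rewrite subrr addrK => <-.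
Qed.
Lemma f_add2 x y y' : f x (y + y') = f x y + f x y'.
Proof. by rewrite -{1}(scale1r y) f_lin2 mul1r. Qed.
Lemma f_sum2 m x (a : 'I_m -> F) (b : 'I_m -> V) :
  f x (\sum_(i < m) a i *: b i) = \sum_(i < m) a i * f x (b i).
Proof.
elim/big_rec2: _ => [|i y z _ <-]; first exact: f_x0.
by rewrite f_lin2.
Qed.

Lemma totisoP (W : VS F n) :
  reflect (forall x y, x \in W -> y \in W -> f x y = 0) (totally_isotropic f W).
Proof.
apply: (iffP forallP) => [h x y xW yW | h x].
  by have /forallP/(_ y) := h x; rewrite xW yW /= => /eqP.
by apply/forallP => y; apply/implyP => xW; apply/implyP => yW; rewrite h.
Qed.

Lemma totiso_sub (U U' : VS F n) : (U' <= U)%VS ->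
  totally_isotropic f U -> totally_isotropic f U'.
Proof.
move=> UU /totisoP h; apply/totisoP => x y xU yU.
by apply: h; apply: (subvP UU).
Qed.

Definition Psi (U : VS F n) (v : V) : 'rV[F]_#|V| :=
  \row_i (if enum_val i \in U then f (enum_val i) v else 0).

Fact Psi_is_linear U : linear (Psi U).
Proof.
move=> a v w; apply/rowP => i; rewrite !mxE.
by case: ifP => _; rewrite ?f_lin2 // mulr0 addr0.
Qed.
HB.instance Definition _ U := GRing.isLinear.Build F V 'rV[F]_#|V| _ (Psi U) (Psi_is_linear U).


Definition Phi (C : VS F n) (u : V) : 'rV[F]_(\dim C) :=
  \row_j f u (vbasis C)`_j.
Fact Phi_is_linear C : linear (Phi C).
Proof. by move=> a v w; apply/rowP => i; rewrite !mxE f_lin1. Qed.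
HB.instance Definition _ C := GRing.isLinear.Build F V 'rV[F]_(\dim C) _ (Phi C) (Phi_is_linear C).

Lemma memPsi (U : VS F n) v :
  (v \in lker (linfun (Psi U))) = [forall u : V, (u \in U) ==> (f u v == 0)].
Proof.
rewrite memv_ker lfunE /=; apply/eqP/forallP => [h u | h].
  apply/implyP => uU; have := congr1 (fun M : 'rV_ _ => M 0 (enum_rank u)) h.
  by rewrite !mxE enum_rankK uU => ->.
apply/rowP => i; rewrite !mxE; case: ifP => // iU.
by have /implyP/(_ iU)/eqP := h (enum_val i).
Qed.

Lemma perp_dim (U : VS F n) : (\dim (lker (linfun (Psi U))) <= n - \dim U)%N.
Proof.
set P := lker _.
set C := (P^C)%VS.
have e0 : (U :&: lker (linfun (Phi C)) = 0)%VS.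
  apply/eqP; rewrite -subv0; apply/subvP => u; rewrite memv_cap memv_ker lfunE /=.
  case/andP => uU /eqP Pu0; rewrite memv0; apply/eqP; apply: f_nd => y.
  have : y \in (P + C)%VS by rewrite addv_complf memvf.
  case/memv_addP => p pP [c cC ->]; rewrite f_add2.
  have -> : f u p = 0 by move: pP; rewrite memPsi => /forallP/(_ u); rewrite uU => /eqP.
  rewrite add0r (coord_vbasis cC) f_sum2; apply: big1 => j _.
  have := congr1 (fun M : 'rV_ _ => M 0 j) Pu0; rewrite !mxE => ->.
  by rewrite mulr0.
have := limg_ker_dim (linfun (Phi C)) U; rewrite e0 dimv0 add0n => dU.
have h1 : (\dim U <= \dim C)%N.
  rewrite -dU; apply: leq_trans (dimvS (subvf _)) _; rewrite dimvf.
  by rewrite /dim /= mul1n.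
have h2 : \dim C = (n - \dim P)%N by rewrite dimv_compl dimvf /dim /= mul1n.
have h3 : (\dim P <= n)%N by have := dimvS (subvf P); rewrite dimvf /dim /= mul1n.
lia.
Qed.

Lemma perp_bound (U : VS F n) : totally_isotropic f U ->
  (#|[set v : V | (v \notin U) && totally_isotropic f (U + <[v]>)%VS]| <=
   q ^ (n - \dim U) - q ^ \dim U)%N.
Proof.
move=> /totisoP Uti.
pose P := lker (linfun (Psi U)).
have UP : (U <= P)%VS.
  apply/subvP => u uU; rewrite memPsi; apply/forallP => u'; apply/implyP => u'U.
  by rewrite Uti.
apply: (@leq_trans #|[pred v | (v \in P) && (v \notin U)]|).
  apply: subset_leq_card; apply/subsetP => v; rewrite !inE => /andP[vU /totisoP h].
  rewrite vU andbT memPsi; apply/forallP => u; apply/implyP => uU; apply/eqP.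
  apply: h; first by apply: (subvP (addvSl U _)).
  by apply: (subvP (addvSr U _)); exact: memv_line.
rewrite card_diff //; apply: leq_sub2r; apply: leq_pexp2l; last exact: perp_dim.
exact: ltnW (q_gt1 F).
Qed.

Lemma prod_rev (G : nat -> rat) k :
  \prod_(1 <= i < k.+1) G i = \prod_(j < k) G (k - j)%N.
Proof.
rewrite big_add1 /= big_nat_rev big_mkord; apply: eq_bigr => j _.
congr (G _); have := ltn_ord j; lia.
Qed.

Lemma card_ext (S : VS F n) (m nu : nat) : n = (2 * nu)%N ->
  (\dim S <= m)%N -> (m < nu)%N ->
  (#|SS (fun U : VS F n => totally_isotropic f U) S (m - \dim S)|%:R : rat) <=
  Nprime q (\dim S) m nu.
Proof.
move=> hn bm mnu.
set b := \dim S; set k := (m - b)%N.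
have Qh : forall U U' : VS F n, (U' <= U)%VS ->
    totally_isotropic f U -> totally_isotropic f U'.
  by move=> U U' h1 h2; apply: totiso_sub h1 h2.
have C := @count_core F n (fun U : VS F n => totally_isotropic f U) Qh
  (fun d => q ^ (n - d) - q ^ d)%N perp_bound k S.
rewrite -/b in C.
set D := \prod_(j < k) _ in C.
have D0 : (0 < D)%N.
  rewrite /D prodn_gt0 // => j; rewrite subn_gt0 ltn_exp2l ?q_gt1 //.
  by rewrite ltn_add2l.
have eG : Nprime q b m nu =
    (\prod_(j < k) (q ^ (n - (b + j)) - q ^ (b + j)))%:R / D%:R.
  rewrite /D !natr_prod -prodf_div /Nprime prod_rev; apply: eq_bigr => j _.
  have jk := ltn_ord j.
  have bm' : (b <= m)%N := bm.
  rewrite /k in jk *.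
  rewrite ratio_term ?q_gt1 //; last 2 first.
  - lia.
  - lia.
  congr ((_ ^+ _ - 1) / (_ ^+ _ - 1)); lia.
by rewrite eG ler_pdivlMr ?ltr0n // -natrM ler_nat.
Qed.

End Symp.

Lemma card_bigcup_le (T I : finType) (P : {pred I}) (B : I -> {set T}) :
  (#|\bigcup_(i in P) B i| <= \sum_(i in P) #|B i|)%N.
Proof.
apply: (big_ind2 (fun (X : {set T}) (k : nat) => #|X| <= k)%N).
- by rewrite cards0.
- move=> X1 k1 X2 k2 h1 h2; rewrite cardsU; apply: leq_trans (leq_subr _ _) _.
  exact: leq_add.
- by [].
Qed.

Lemma bigmin_le_seq (I : eqType) (r : seq I) x (P : pred I) (G : I -> nat) j :
  j \in r -> P j -> (\big[minn/x]_(i <- r | P i) G i <= G j)%N.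
Proof.
elim: r => // a r IH; rewrite in_cons big_cons => /orP[/eqP <-|jr] Pj.
  by rewrite Pj geq_minl.
case: (P a); last exact: IH.
exact: leq_trans (geq_minr _ _) (IH jr Pj).
Qed.

Section Tau.
Variables (F : finFieldType) (n : nat) (f : 'rV[F]_n -> 'rV[F]_n -> F).

Lemma tau_le t H X : t_cover f t H X -> (tau f t H <= \dim X)%N.
Proof. by move=> hX; rewrite /tau; apply: bigmin_le_seq; rewrite ?mem_index_enum. Qed.

Lemma tau_attained t H X0 : t_cover f t H X0 ->
  exists2 X, t_cover f t H X & \dim X = tau f t H.
Proof.
move=> h0.
have : tau f t H = n.+1 \/ exists2 X, t_cover f t H X & \dim X = tau f t H.
  rewrite /tau; apply: (big_ind (fun v => v = n.+1 \/ exists2 X, t_cover f t H X & \dim X = v)).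
  - by left.
  - by move=> x y hx hy; rewrite /minn; case: ltnP.
  - by move=> X hX; right; exists X.
case => // e; exfalso.
have := tau_le h0; rewrite e; have := dimvS (subvf X0); rewrite dimvf /dim /= mul1n.
lia.
Qed.

End Tau.

Lemma Nprime_ge0 q a m nu : (0 < q)%N -> 0 <= Nprime q a m nu.
Proof.
move=> q0; rewrite /Nprime; apply: prodr_ge0 => i _.
have h : forall k, 0 <= (q%:R : rat) ^+ k - 1.
  by move=> k; rewrite subr_ge0 exprn_ege1 // ler1n.
by apply: divr_ge0.
Qed.

Section Main.
Variables (F : finFieldType) (nu m1 m2 t : nat).
Local Notation n := (2 * nu)%N.
Local Notation V := 'rV[F]_n.
Local Notation q := #|F|.
Variable f : V -> V -> F.
Variables FF GG : {set VS F n}.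
Hypothesis Hf : nondeg_alternating_bilinear_form f.
Hypotheses (t0 : (0 < t)%N) (tm1 : (t <= m1)%N) (m1nu : (m1 < nu)%N)
  (tm2 : (t <= m2)%N) (m2nu : (m2 < nu)%N).
Hypotheses (HF : FF \subset Pm f m1) (HG : GG \subset Pm f m2).
Hypotheses (FF0 : FF != set0) (GG0 : GG != set0).
Hypothesis Hc : cross_t_intersecting t FF GG.

Lemma inFF A : A \in FF -> \dim A = m1 /\ totally_isotropic f A.
Proof. by move=> /(subsetP HF); rewrite inE => /andP[/eqP -> ->]. Qed.
Lemma inGG A : A \in GG -> \dim A = m2 /\ totally_isotropic f A.
Proof. by move=> /(subsetP HG); rewrite inE => /andP[/eqP -> ->]. Qed.

Lemma covF G : G \in GG -> t_cover f t FF G.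
Proof.
move=> GG_G; rewrite /t_cover (inGG GG_G).2 /=; apply/forall_inP => A AF.
by rewrite capvC; apply: Hc.
Qed.

Lemma covG A : A \in FF -> t_cover f t GG A.
Proof.
move=> AF; rewrite /t_cover (inFF AF).2 /=; apply/forall_inP => G GG_G.
exact: Hc.
Qed.

Definition tauF := tau f t FF.
Definition tauG := tau f t GG.

Lemma tauG_le : (tauG <= m1)%N.
Proof.
rewrite /tauG; case/set0Pn: FF0 => A AF; rewrite -(inFF AF).1; exact: tau_le (covG AF).
Qed.

Lemma tauG_ge : (t <= tauG)%N.
Proof.
rewrite /tauG; case/set0Pn: FF0 => A AF; case/set0Pn: GG0 => G GG_G.
have [Y /andP[_ /forall_inP hY] <-] := tau_attained (covG AF).
by apply: leq_trans (hY G GG_G) _; apply: dimvS; apply: capvSl.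
Qed.

Lemma notcover (S : VS F n) : totally_isotropic f S -> (\dim S < tauG)%N ->
  exists2 G, G \in GG & (\dim (S :&: G) < t)%N.
Proof.
move=> Sti; rewrite /tauG => dS.
have : ~~ t_cover f t GG S.
  by apply: contraTN dS => /tau_le; rewrite -leqNgt.
rewrite /t_cover Sti /= => /forall_inPn [G GG_G]; rewrite -ltnNge => h.
by exists G.
Qed.

Definition goodT (S T : VS F n) : bool :=
  [&& [exists G : VS F n, (G \in GG) && (T <= G)%VS],
      \dim T == (m2 - t + 1)%N & (T :&: S == 0)%VS].

Lemma goodT_exists (S : VS F n) : totally_isotropic f S -> (\dim S < tauG)%N ->
  exists T, goodT S T.
Proof.
move=> Sti dS; have [G GG_G dSG] := notcover Sti dS.
have dG := (inGG GG_G).1.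
have hY := dimv_cap_compl G S.
have : (m2 - t + 1 <= \dim (G :\: S))%N by rewrite capvC in dSG; lia.
case/exists_subdim => T TY dT; exists T; apply/and3P; split.
- apply/existsP; exists G; rewrite GG_G /=; exact: subv_trans TY (diffvSl _ _).
- by rewrite dT.
- rewrite -subv0 -(capv_diff G S); exact: capvS TY (subvv S).
Qed.

Lemma extend (S T A : VS F n) : goodT S T -> A \in FF -> (S <= A)%VS ->
  exists2 L : VS F n, (L <= T)%VS && (\dim L == 1%N) &
    ((S + L <= A)%VS /\ \dim (S + L) = (\dim S).+1).
Proof.
case/and3P => /existsP[G /andP[GG_G TG]] /eqP dT /eqP TS AF SA.
have dG := (inGG GG_G).1.
have hAG := Hc AF GG_G.
have h1 := dimv_sum_cap (A :&: G) T.
have h2 : (\dim ((A :&: G) + T) <= m2)%N.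
  by rewrite -dG; apply: dimvS; rewrite subv_add capvSr TG.
have : (1 <= \dim ((A :&: G) :&: T))%N by lia.
case/exists_subdim => L LZ dL; exists L.
  by rewrite (subv_trans LZ (capvSr _ _)) dL eqxx.
have LA : (L <= A)%VS.
  by apply: subv_trans LZ _; apply: subv_trans (capvSl _ _) (capvSl _ _).
split; first by rewrite subv_add SA LA.
have h3 := dimv_sum_cap S L.
have : \dim (S :&: L) = 0%N.
  apply/eqP; rewrite dimv_eq0 -subv0 -TS capvC.
  exact: capvS (subv_trans LZ (capvSr _ _)) (subvv S).
lia.
Qed.

Definition addVS (S L : VS F n) : VS F n := (S + L)%VS.

Definition Lset (S : VS F n) : {set VS F n} :=
  if [pick T | goodT S T] is Some T then
    [set addVS S L | L in [set L : VS F n | (L <= T)%VS && (\dim L == 1%N)]]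
  else set0.

Fixpoint Aset (X : VS F n) (j : nat) : {set VS F n} :=
  if j is j'.+1 then \bigcup_(S in Aset X j') Lset S
  else [set S : VS F n | (S <= X)%VS && (\dim S == t)].

Lemma cardL (S : VS F n) : (#|Lset S|%:R : rat) <= gauss q (m2 - t + 1) 1.
Proof.
rewrite /Lset; case: pickP => [T /and3P[_ /eqP dT _] | _]; last first.
  by rewrite cards0 gauss_ge0 // ltnW // q_gt1.
rewrite -dT; apply: le_trans (card_subdim T 1); rewrite ler_nat; exact: leq_imset_card.
Qed.

Lemma cardA (X : VS F n) j : \dim X = tauF ->
  (#|Aset X j|%:R : rat) <= gauss q tauF t * gauss q (m2 - t + 1) 1 ^+ j.
Proof.
move=> dX; elim: j => [|j IH] /=.
  by rewrite expr0 mulr1 -dX; exact: card_subdim.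
apply: (@le_trans _ _ ((\sum_(S in Aset X j) #|Lset S|)%N%:R)).
  by rewrite ler_nat; apply: card_bigcup_le.
rewrite natr_sum exprS mulrA [_ * gauss _ _ _]mulrC -mulrA.
apply: le_trans (_ : \sum_(S in Aset X j) gauss q (m2 - t + 1) 1 <= _).
  by apply: ler_sum => S _; exact: cardL.
rewrite sumr_const -mulr_natr mulrC [in leRHS]mulrC; apply: ler_wpM2r => //.
by rewrite gauss_ge0 // ltnW // q_gt1.
Qed.

Lemma coverA (X A : VS F n) j : t_cover f t FF X -> A \in FF ->
  (j <= tauG - t)%N ->
  exists2 S, S \in Aset X j & (S <= A)%VS && (\dim S == t + j)%N.
Proof.
move=> /andP[_ /forall_inP hX] AF; elim: j => [|j IH] hj /=.
  have : (t <= \dim (X :&: A))%N by apply: hX.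
  case/exists_subdim => S SXA dS; exists S.
    by rewrite inE dS eqxx andbT; apply: subv_trans SXA (capvSl _ _).
  by rewrite dS addn0 eqxx andbT; apply: subv_trans SXA (capvSr _ _).
have [S SA /andP[SsubA /eqP dS]] := IH (ltnW hj).
have Sti : totally_isotropic f S by apply: totiso_sub SsubA (inFF AF).2.
have dSlt : (\dim S < tauG)%N by have := tauG_ge; lia.
have [T0 gT0] := goodT_exists Sti dSlt.
case hp: [pick T | goodT S T] => [T|]; last first.
  by move: hp; case: pickP => // /(_ T0); rewrite gT0.
have gT : goodT S T by move: hp; case: pickP => // T' gT' [<-].
have [L hL [SLA dSL]] := extend gT AF SsubA.
exists (addVS S L).
  apply/bigcupP; exists S => //; rewrite /Lset hp; apply/imsetP; exists L => //.
  by rewrite inE.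
by rewrite /addVS SLA dSL dS addnS eqxx.
Qed.

Lemma main_bound : (#|FF|%:R : rat) <=
  gauss q tauF t * gauss q (m2 - t + 1) 1 ^+ (tauG - t) * Nprime q tauG m1 nu.
Proof.
case/set0Pn: (GG0) => G0 G0in.
have [X Xc dX] := tau_attained (covF G0in).
set k0 := (tauG - t)%N.
pose U' (S : VS F n) := if \dim S == tauG then
  SS (fun U : VS F n => totally_isotropic f U) S (m1 - \dim S) else set0.
have sub : FF \subset \bigcup_(S in Aset X k0) U' S.
  apply/subsetP => A AF; have [S SA /andP[SsubA /eqP dS]] := coverA Xc AF (leqnn k0).
  have dSt : \dim S = tauG by rewrite dS /k0; have := tauG_ge; lia.
  apply/bigcupP; exists S => //; rewrite /U' dSt eqxx inE SsubA (inFF AF).2 (inFF AF).1.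
  by rewrite andbT /=; apply/eqP; have := tauG_le; lia.
have c1 : (#|FF|%:R : rat) <= (\sum_(S in Aset X k0) #|U' S|)%N%:R.
  by rewrite ler_nat; apply: leq_trans (subset_leq_card sub) (card_bigcup_le _ _).
apply: le_trans c1 _; rewrite natr_sum.
apply: le_trans (_ : \sum_(S in Aset X k0) Nprime q tauG m1 nu <= _).
  apply: ler_sum => S _; rewrite /U'; case: eqP => dS; last first.
    by rewrite cards0 Nprime_ge0 // ltnW // q_gt1.
  rewrite -dS; apply: (card_ext Hf) => //.
  by rewrite dS; exact: tauG_le.
rewrite sumr_const -mulr_natr mulrC; apply: ler_wpM2r.
  by rewrite Nprime_ge0 // ltnW // q_gt1.
exact: cardA.
Qed.

End Main.

Unset Implicit Arguments.

Theorem lemma2p3 (F : finFieldType) (nu m1 m2 t : nat)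
    (f : 'rV[F]_(2 * nu) -> 'rV[F]_(2 * nu) -> F)
    (FF GG : {set VS F (2 * nu)}) :
  nondeg_alternating_bilinear_form f ->
  (0 < t)%N -> (t <= m1)%N -> (m1 < nu)%N -> (t <= m2)%N -> (m2 < nu)%N ->
  (2 * m1 + m2 - t <= 2 * nu)%N ->
  FF \subset Pm f m1 -> GG \subset Pm f m2 ->
  FF != set0 -> GG != set0 ->
  cross_t_intersecting t FF GG ->
  (#|FF|%:R : rat) <=
    gauss #|F| (tau f t FF) t
    * gauss #|F| (m2 - t + 1) 1 ^+ (tau f t GG - t)
    * Nprime #|F| (tau f t GG) m1 nu.
Proof.
move=> Hf t0 tm1 m1nu tm2 m2nu _ HF HG FF0 GG0 Hc.
by apply: main_bound; eassumption.
Qed.
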